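(* Let $M$ be a finite abelian group of exponent greater than $2$, and let $f$ be a half-automorphism of $L_M$. Then $f((1,M))=(1,M)$, where $(1,M)=\{(1,x):x\in M\}$.
   Context: Let $K=\{1,a,b,c\}$ be the Klein four-group. Set $L_M=K\times M$ with the operation $(A,x)*(B,y)=(AB,xy)$ if $B=1$, and $(A,x)*(B,y)=(AB,x^{-1}y)$ if $B\neq 1$. A half-automorphism of a loop $L$ is a bijection $f:L\to L$ such that $f(XY)\in\{f(X)f(Y),f(Y)f(X)\}$ for all $X,Y\in L$. *)

(* Defs.v *)
From mathcomp Require Import all_boot all_fingroup all_solvable.
Set Implicit Arguments. Unset Strict Implicit. Unset Printing Implicit Defensive.
Local Open Scope group_scope.

(* The Klein four-group K = {1,a,b,c}, realised as bool * bool with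
   componentwise xor: 1 = (false,false), a = (true,false),
   b = (false,true), c = (true,true). *)
Definition Klein : finType := (bool * bool)%type.
Definition K1 : Klein := (false, false).
Definition Kmul (A B : Klein) : Klein := (xorb A.1 B.1, xorb A.2 B.2).

Definition LM (gT : finGroupType) : finType := (Klein * gT)%type.

Definition Lmul (gT : finGroupType) (X Y : LM gT) : LM gT :=
  if Y.1 == K1 then (Kmul X.1 Y.1, (X.2 : gT) * Y.2)
  else (Kmul X.1 Y.1, (X.2 : gT)^-1 * Y.2).

Definition half_automorphism (gT : finGroupType) (f : LM gT -> LM gT) : Prop :=
  bijective f /\
  forall X Y : LM gT,
    f (Lmul X Y) = Lmul (f X) (f Y) \/ f (Lmul X Y) = Lmul (f Y) (f X).

Definition oneM (gT : finGroupType) : {set LM gT} := [set X : LM gT | X.1 == K1].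

(* Main.v *)
Require Import Defs.
From mathcomp Require Import all_boot all_fingroup all_solvable.
Set Implicit Arguments. Unset Strict Implicit. Unset Printing Implicit Defensive.
Local Open Scope group_scope.

Lemma Kmul_same (A : Klein) : Kmul A A = K1.
Proof. by case: A => [[] []]. Qed.

Lemma Kmul11 : Kmul K1 K1 = K1.
Proof. by []. Qed.

Theorem proposition4p1 (gT : finGroupType)
  (Mab : abelian [set: gT]) (Mexp : 2 < exponent [set: gT])
  (f : LM gT -> LM gT) (hf : half_automorphism f) :
  f @: oneM gT = oneM gT.
Proof.
case: hf => fbij fh.
have finj : injective f by apply: bij_inj.
have sq : forall X, f (Lmul X X) = Lmul (f X) (f X) by move=> X; case: (fh X X).
pose e : LM gT := (K1, 1).
have fe : f e = e.
  have := sq e; rewrite /e /Lmul /= mulg1 => H.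
  move: H; case E: (f (K1, 1)) => [A y] /=.
  case: (eqVneq A K1) => HA H; case: H.
    by move=> _ H2; subst A; congr pair; apply: (mulgI y); rewrite mulg1 -H2.
  by move=> H1; move: HA; rewrite H1 Kmul_same eqxx.
have S : forall x : gT, x * x != 1 -> (f (K1, x)).1 == K1.
  move=> x hx; apply/negPn/negP => hn.
  have : f (Lmul (K1, x) (K1, x)) = f e.
    rewrite sq fe /Lmul (negbTE hn) /= Kmul_same mulVg //.
  move/finj; rewrite /Lmul /= => [[]] h; by rewrite h eqxx in hx.
have [g hg] : exists g : gT, g * g != 1.
  case: (boolP [exists g : gT, g * g != 1]) => [/existsP//|].
  rewrite negb_exists => /forallP H; exfalso.
  have : exponent [set: gT] %| 2.
    apply/exponentP => x _; rewrite expgS expg1; apply/eqP.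
    by move: (H x); rewrite negbK.
  by move/(dvdn_leq (isT : 0 < 2)); rewrite leqNgt Mexp.
have comm : forall x y : gT, x * y = y * x.
  by move=> x y; apply: (centsP Mab); rewrite inE.
have sub : f @: oneM gT \subset oneM gT.
  apply/subsetP => _ /imsetP [[A x] hX ->].
  rewrite inE in hX; move/eqP: hX => /= hA; subst A.
  rewrite inE.
  have [hx|hx] := eqVneq (x * x) 1; last by apply: S.
  have e1 : (K1, x) = Lmul (K1, x * g) (K1, g^-1) :> LM gT.
    by rewrite /Lmul /= ?eqxx mulgK.
  have hU : (x * g) * (x * g) != 1.
    by rewrite mulgA -(mulgA x g x) (comm g x) mulgA hx mul1g.
  have hV : g^-1 * g^-1 != 1.
    by rewrite -invMg invg_eq1.
  have oU := S _ hU; have oV := S _ hV.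
  rewrite e1; case: (fh (K1, x * g) (K1, g^-1)) => ->;
    rewrite /Lmul ?(eqP oU) ?(eqP oV) eqxx /=;
    by [rewrite ?(eqP oU) ?(eqP oV)].
apply/eqP; rewrite eqEcard sub /= card_imset //.
Qed.
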